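(* Let $(\mathfrak g,[\cdot,\cdot]_{\mathfrak g},E)$ be an ENL algebra and let $r\in\mathfrak g\otimes\mathfrak g$ be an EN $r$-matrix, i.e. $[\![r,r]\!]=0$ and $(\mathrm{Id}\otimes E-E\otimes\mathrm{Id})(r)=0$. Assume moreover that $(\mathrm{ad}_x\otimes\mathrm{Id}+\mathrm{Id}\otimes\mathrm{ad}_x)(r+r^{21})=0$ for all $x\in\mathfrak g$. Then the cobracket $\Delta_r(x)=(\mathrm{ad}_x\otimes\mathrm{Id}+\mathrm{Id}\otimes\mathrm{ad}_x)(r)$ endows $\mathfrak g$ with a coboundary ENL bialgebra structure: $(\mathfrak g,\Delta_r)$ is a Lie bialgebra and $\Delta_r\circ E=(E\otimes\mathrm{Id})\circ\Delta_r$ (equivalently, $E^*$ is an equivariant Nijenhuis operator on the Lie algebra $\mathfrak g^*$ whose bracket is dual to $\Delta_r$).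
   Context: All vector spaces are finite-dimensional over an algebraically closed field of characteristic zero. An ENL algebra is a Lie algebra with linear $E$ such that $E[x,y]=[x,Ey]$ for all $x,y$. For $r=\sum_i a_i\otimes b_i\in\mathfrak g\otimes\mathfrak g$, $r^{21}=\sum_i b_i\otimes a_i$, and $[\![r,r]\!]=[r_{12},r_{13}]+[r_{13},r_{23}]+[r_{12},r_{23}]$ computed in $U(\mathfrak g)^{\otimes3}$ with $r_{12}=\sum a_i\otimes b_i\otimes1$, $r_{13}=\sum a_i\otimes1\otimes b_i$, $r_{23}=\sum1\otimes a_i\otimes b_i$. A Lie bialgebra $(\mathfrak g,\Delta)$ is a Lie algebra with a coantisymmetric map $\Delta:\mathfrak g\to\mathfrak g\otimes\mathfrak g$ satisfying the co-Jacobi identity (so that the dual bracket $\langle[\alpha,\beta]_{\mathfrak g^*},x\rangle=\langle\alpha\otimes\beta,\Delta(x)\rangle$ is a Lie bracket on $\mathfrak g^*$) and the 1-cocycle condition $\Delta([x,y])=(\mathrm{ad}_x\otimes\mathrm{Id}+\mathrm{Id}\otimes\mathrm{ad}_x)\Delta(y)-(\mathrm{ad}_y\otimes\mathrm{Id}+\mathrm{Id}\otimes\mathrm{ad}_y)\Delta(x)$. An ENL bialgebra $(\mathfrak g,\Delta,E)$ is a Lie bialgebra such that $(\mathfrak g,E)$ and $(\mathfrak g^*,E^* )$ are ENL algebras; it is coboundary if $\Delta=\Delta_r$ for some $r\in\mathfrak g\otimes\mathfrak g$. *)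

(* Defs.v *)
(* Finite-dimensional Lie algebra g = K^n in coordinates
   w.r.t. a fixed basis e_0..e_{n-1}; elements of g are row vectors 'rV[K]_n,
   linear maps act on the right (x |-> x *m A), and a tensor
   T = \sum_{i,j} T i j e_i (x) e_j of g (x) g is stored as the matrix T. *)
From HB Require Import structures.
From mathcomp Require Import all_boot all_order all_algebra.
Set Implicit Arguments. Unset Strict Implicit. Unset Printing Implicit Defensive.
Import Order.TTheory GRing.Theory.
Local Open Scope ring_scope.

Section Defs.
Variables (K : fieldType) (n : nat).

(* bracket given by structure constants: [e_i, e_j] = \sum_k c i j k e_k *)
Definition lbr (c : 'I_n -> 'I_n -> 'I_n -> K) (x y : 'rV[K]_n) : 'rV[K]_n :=
  \row_k \sum_i \sum_j x 0 i * y 0 j * c i j k.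

(* b is a Lie bracket: bilinear (left linear + antisymmetric), antisymmetric,
   Jacobi *)
Definition is_lie_bracket (b : 'rV[K]_n -> 'rV[K]_n -> 'rV[K]_n) : Prop :=
  [/\ (forall a x y z, b (a *: x + y) z = a *: b x z + b y z),
      (forall x y, b x y = - b y x) &
      (forall x y z, b x (b y z) + b y (b z x) + b z (b x y) = 0)].

Definition is_ENL (b : 'rV[K]_n -> 'rV[K]_n -> 'rV[K]_n) (E : 'M[K]_n) : Prop :=
  forall x y, b x y *m E = b x (y *m E).

(* matrix of ad_x : y |-> [x,y]  (so that  y *m adm c x = lbr c x y) *)
Definition adm (c : 'I_n -> 'I_n -> 'I_n -> K) (x : 'rV[K]_n) : 'M[K]_n :=
  \matrix_(j, k) \sum_i x 0 i * c i j k.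

(* (A (x) B)(T) *)
Definition tmap (A B T : 'M[K]_n) : 'M[K]_n := A^T *m T *m B.

Definition cob (c : 'I_n -> 'I_n -> 'I_n -> K) (R : 'M[K]_n) (x : 'rV[K]_n)
  : 'M[K]_n := tmap (adm c x) 1 R + tmap 1 (adm c x) R.

(* [[r,r]] = [r12,r13] + [r13,r23] + [r12,r23], which lies in g(x)g(x)g:
   [r12,r13] = \sum [a_i,a_j] (x) b_i (x) b_j,
   [r13,r23] = \sum a_i (x) a_j (x) [b_i,b_j],
   [r12,r23] = \sum a_i (x) [b_i,a_j] (x) b_j;
   coefficient of e_a (x) e_b (x) e_d : *)
Definition CYB (c : 'I_n -> 'I_n -> 'I_n -> K) (R : 'M[K]_n)
  (a b d : 'I_n) : K :=
    \sum_p \sum_s R p b * R s d * c p s a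
  + \sum_q \sum_t R a q * R b t * c q t d
  + \sum_q \sum_s R a q * R s d * c q s b.

(* dual bracket on g^* (dual basis coordinates, pairing <alpha,x> = alpha x^T):
   <[alpha,beta], e_k> = <alpha (x) beta, Delta(e_k)> *)
Definition dbr (D : 'rV[K]_n -> 'M[K]_n) (al be : 'rV[K]_n) : 'rV[K]_n :=
  \row_k (al *m D (delta_mx 0 k) *m be^T) 0 0.

Definition is_lie_bialgebra (c : 'I_n -> 'I_n -> 'I_n -> K)
  (D : 'rV[K]_n -> 'M[K]_n) : Prop :=
  [/\ is_lie_bracket (lbr c),
      (forall a x y, D (a *: x + y) = a *: D x + D y),
      (forall x, (D x)^T = - D x),
      is_lie_bracket (dbr D) &
      (forall x y, D (lbr c x y) =
          tmap (adm c x) 1 (D y) + tmap 1 (adm c x) (D y)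
        - (tmap (adm c y) 1 (D x) + tmap 1 (adm c y) (D x)))].

(* ENL bialgebra: Lie bialgebra with (g,E) and (g^*,E^* ) ENL algebras;
   E^* alpha = alpha *m E^T in dual coordinates *)
Definition is_ENL_bialgebra (c : 'I_n -> 'I_n -> 'I_n -> K)
  (D : 'rV[K]_n -> 'M[K]_n) (E : 'M[K]_n) : Prop :=
  [/\ is_lie_bialgebra c D, is_ENL (lbr c) E & is_ENL (dbr D) E^T].

End Defs.

(* Main.v *)
Require Import Defs.
From HB Require Import structures.
From mathcomp Require Import all_boot all_order all_algebra.
From mathcomp Require Import ring.
Import Order.TTheory GRing.Theory.
Local Open Scope ring_scope.

Section Gen.
Context {K : fieldType} {n : nat}.

Lemma mxeD m p (u v : 'M[K]_(m,p)) i k : (u + v) i k = u i k + v i k.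
Proof. by rewrite mxE. Qed.
Lemma mxeN m p (u : 'M[K]_(m,p)) i k : (- u) i k = - u i k.
Proof. by rewrite mxE. Qed.
Lemma mxeB m p (u v : 'M[K]_(m,p)) i k : (u - v) i k = u i k - v i k.
Proof. by rewrite mxeD mxeN. Qed.
Lemma mxeZ m p a (u : 'M[K]_(m,p)) i k : (a *: u) i k = a * u i k.
Proof. by rewrite mxE. Qed.
Lemma mxe0 m p i k : (0 : 'M[K]_(m,p)) i k = 0.
Proof. by rewrite mxE. Qed.

Definition pr (u v : 'rV[K]_n) : K := (u *m v^T) 0 0.

Lemma pr_sym u v : pr u v = pr v u.
Proof. by rewrite /pr -[v *m u^T]trmxK trmx_mul trmxK [RHS]mxE. Qed.
Lemma pr_mul u (M : 'M[K]_n) v : pr (u *m M) v = pr u (v *m M^T).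
Proof. by rewrite /pr trmx_mul trmxK mulmxA. Qed.
Lemma prDl u v w : pr (u + v) w = pr u w + pr v w.
Proof. by rewrite /pr mulmxDl mxeD. Qed.
Lemma prNl u w : pr (- u) w = - pr u w.
Proof. by rewrite /pr mulNmx mxeN. Qed.
Lemma prZl a u w : pr (a *: u) w = a * pr u w.
Proof. by rewrite /pr -scalemxAl mxeZ. Qed.
Lemma prBl u v w : pr (u - v) w = pr u w - pr v w.
Proof. by rewrite prDl prNl. Qed.
Lemma prDr u v w : pr w (u + v) = pr w u + pr w v.
Proof. by rewrite pr_sym prDl -!(pr_sym w). Qed.
Lemma prNr u w : pr w (- u) = - pr w u.
Proof. by rewrite pr_sym prNl pr_sym. Qed.
Lemma prZr a u w : pr w (a *: u) = a * pr w u.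
Proof. by rewrite pr_sym prZl pr_sym. Qed.
Lemma prBr u v w : pr w (u - v) = pr w u - pr w v.
Proof. by rewrite prDr prNr. Qed.
Lemma pr_delta u k : pr u (delta_mx 0 k) = u 0 k.
Proof. by rewrite /pr trmx_delta -colE mxE. Qed.
Lemma row_ext u v : (forall x, pr u x = pr v x) -> u = v.
Proof. by move=> h; apply/rowP => k; rewrite -!pr_delta h. Qed.

Lemma mx_ext (M N : 'M[K]_n) : (forall y : 'rV_n, y *m M = y *m N) -> M = N.
Proof. by move=> h; apply/row_matrixP => i; rewrite !rowE h. Qed.

Lemma lin_sum (V : lmodType K) (h : 'rV[K]_n -> V)
  (hl : forall a x y, h (a *: x + y) = a *: h x + h y) x :
  h x = \sum_i x 0 i *: h (delta_mx 0 i).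
Proof.
have h0 : h 0 = 0.
  have := hl 1 0 0; rewrite scale1r addr0 scale1r => e.
  by apply: (addrI (h 0)); rewrite addr0 -e.
rewrite {1}(row_sum_delta x).
elim/big_rec2: _ => [//|i y1 y2 _ <-]; by rewrite hl.
Qed.

Lemma bilin_ext (f g : 'rV[K]_n -> 'rV[K]_n -> 'rV[K]_n)
  (fl : forall a x y z, f (a *: x + y) z = a *: f x z + f y z)
  (fr : forall a x y z, f z (a *: x + y) = a *: f z x + f z y)
  (gl : forall a x y z, g (a *: x + y) z = a *: g x z + g y z)
  (gr : forall a x y z, g z (a *: x + y) = a *: g z x + g z y)
  (hb : forall i j, f (delta_mx 0 i) (delta_mx 0 j) = g (delta_mx 0 i) (delta_mx 0 j)) :
  forall x y, f x y = g x y.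
Proof.
move=> x y.
rewrite (@lin_sum _ (f^~ y) (fun a x1 x2 => fl a x1 x2 y) x) (@lin_sum _ (g^~ y) (fun a x1 x2 => gl a x1 x2 y) x).
apply: eq_bigr => i _; congr (_ *: _).
rewrite (@lin_sum _ (f _) (fun a x1 x2 => fr a x1 x2 _) y) (@lin_sum _ (g _) (fun a x1 x2 => gr a x1 x2 _) y).
by apply: eq_bigr => j _; rewrite hb.
Qed.
Lemma lc6 (V : zmodType) (g e1 e2 e3 e4 e5 e6 : V) : e1 = 0 -> e2 = 0 -> e3 = 0 ->
  e4 = 0 -> e5 = 0 -> e6 = 0 -> g = - e1 + e2 + e3 + e4 - e5 + e6 -> g = 0.
Proof. by move=> -> -> -> -> -> -> ->; rewrite !(oppr0, addr0, subr0). Qed.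
End Gen.

Section Lie.
Variables (K : fieldType) (n : nat) (c : 'I_n -> 'I_n -> 'I_n -> K).
Hypothesis hlie : is_lie_bracket (lbr c).
Local Notation br := (lbr c).
Local Notation A := (adm c).
Local Notation pr := (@pr K n).

Lemma brDZl a x y z : br (a *: x + y) z = a *: br x z + br y z.
Proof. by case: hlie. Qed.
Lemma brN x y : br x y = - br y x.
Proof. by case: hlie. Qed.
Lemma brJ x y z : br x (br y z) + br y (br z x) + br z (br x y) = 0.
Proof. by case: hlie. Qed.
Lemma br0l z : br 0 z = 0.
Proof.
have := brDZl 1 0 0 z; rewrite scale1r addr0 scale1r => e.
by apply: (addrI (br 0 z)); rewrite addr0 -e.
Qed.
Lemma brDl x y z : br (x + y) z = br x z + br y z.
Proof. by have := brDZl 1 x y z; rewrite !scale1r. Qed.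
Lemma brZl a x z : br (a *: x) z = a *: br x z.
Proof. by have := brDZl a x 0 z; rewrite !addr0 br0l addr0. Qed.
Lemma brNl x z : br (- x) z = - br x z.
Proof. by rewrite -scaleN1r brZl scaleN1r. Qed.
Lemma brBl x y z : br (x - y) z = br x z - br y z.
Proof. by rewrite brDl brNl. Qed.
Lemma brDr x y z : br z (x + y) = br z x + br z y.
Proof. by rewrite brN brDl opprD -!brN. Qed.
Lemma brZr a x z : br z (a *: x) = a *: br z x.
Proof. by rewrite brN brZl -scalerN -brN. Qed.
Lemma brNr x z : br z (- x) = - br z x.
Proof. by rewrite brN brNl opprK brN. Qed.
Lemma brBr x y z : br z (x - y) = br z x - br z y.
Proof. by rewrite brDr brNr. Qed.
Lemma brDZr a x y z : br z (a *: x + y) = a *: br z x + br z y.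
Proof. by rewrite brDr brZr. Qed.

Lemma admE x y : y *m A x = br x y.
Proof.
apply/rowP => k; rewrite !mxE.
under eq_bigr => j _ do rewrite mxE big_distrr /=.
rewrite exchange_big /=; apply: eq_bigr => i _; apply: eq_bigr => j _.
by rewrite mulrA [y 0 j * _]mulrC.
Qed.

Lemma admDZ a x y : A (a *: x + y) = a *: A x + A y.
Proof.
by apply: mx_ext => z; rewrite mulmxDr -scalemxAr !admE brDZl.
Qed.
Lemma admD x y : A (x + y) = A x + A y.
Proof. by have := admDZ 1 x y; rewrite !scale1r. Qed.
Lemma admN x : A (- x) = - A x.
Proof. by apply: mx_ext => z; rewrite mulmxN !admE brNl. Qed.
Lemma adm_br x y : A (br x y) = A y *m A x - A x *m A y.
Proof.
apply: mx_ext => z; rewrite mulmxBr !mulmxA !admE.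
rewrite (brN (br x y)).
have := brJ x y z; rewrite addrC => /eqP; rewrite addr_eq0 => /eqP ->.
by rewrite opprK (brN z x) brNr.
Qed.

Definition star (al u : 'rV[K]_n) : 'rV[K]_n := - (al *m (A u)^T).

Lemma pr_star al u x : pr (star al u) x = pr al (br x u).
Proof. by rewrite /star prNl pr_mul trmxK admE (brN u) prNr opprK. Qed.

Lemma starDl u v w : star (u + v) w = star u w + star v w.
Proof. by apply: row_ext => x; rewrite prDl !pr_star prDl. Qed.
Lemma starNl u w : star (- u) w = - star u w.
Proof. by apply: row_ext => x; rewrite prNl !pr_star prNl. Qed.
Lemma starBl u v w : star (u - v) w = star u w - star v w.
Proof. by rewrite starDl starNl. Qed.
Lemma starZl a u w : star (a *: u) w = a *: star u w.
Proof. by apply: row_ext => x; rewrite prZl !pr_star prZl. Qed.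
Lemma starDr u v w : star w (u + v) = star w u + star w v.
Proof. by apply: row_ext => x; rewrite prDl !pr_star brDr prDr. Qed.
Lemma starNr u w : star w (- u) = - star w u.
Proof. by apply: row_ext => x; rewrite prNl !pr_star brNr prNr. Qed.
Lemma starBr u v w : star w (u - v) = star w u - star w v.
Proof. by rewrite starDr starNr. Qed.
Lemma starZr a u w : star w (a *: u) = a *: star w u.
Proof. by apply: row_ext => x; rewrite prZl !pr_star brZr prZr. Qed.

Lemma star_br al u v : star al (br u v) = star (star al v) u - star (star al u) v.
Proof.
apply: row_ext => x; rewrite prBl !pr_star -prBr; congr (pr al _).
rewrite (brN (br x u)) (brN (br x v)) opprK (brN x v) brNr.
have := brJ x u v; rewrite -addrA => /eqP; rewrite addr_eq0 => /eqP ->.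
by rewrite opprD addrC.
Qed.

Variable R : 'M[K]_n.
Local Notation S := (R + R^T).
Hypothesis hinvS : forall x, (A x)^T *m S + S *m A x = 0.

Lemma S_sym : S^T = S.
Proof. by rewrite linearD /= trmxK addrC. Qed.

Lemma starS al x : star al x *m S = br x (al *m S).
Proof.
have h : (A x)^T *m S = - (S *m A x).
  by apply/eqP; rewrite -addr_eq0; apply/eqP; apply: hinvS.
by rewrite /star mulNmx -mulmxA h mulmxN opprK mulmxA admE.
Qed.

Lemma starSS al be : star al (be *m S) = - star be (al *m S).
Proof.
apply: row_ext => x; rewrite prNl !pr_star -starS pr_sym pr_mul S_sym pr_star.
by rewrite brN prNr.
Qed.

Definition rt (x : 'rV[K]_n) := x *m R^T.
Lemma mulRT x : x *m R^T = rt x.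
Proof. by []. Qed.
Lemma rtE x : rt x = x *m S - x *m R.
Proof. by rewrite /rt mulmxDr addrAC subrr add0r. Qed.

Definition db (al be : 'rV[K]_n) := star al (rt be) + star be (al *m R).

Lemma pr_db al be x : pr (db al be) x = pr (al *m cob c R x) be.
Proof.
rewrite /db /cob /tmap trmx1 mulmx1 mul1mx mulmxDr prDl !pr_star.
rewrite !mulmxA prDl; congr (_ + _).
  by rewrite pr_mul pr_mul trmxK admE mulRT.
by rewrite admE pr_sym.
Qed.

Lemma dbE al be : dbr (cob c R) al be = db al be.
Proof. by apply/rowP => k; rewrite mxE -[RHS]pr_delta pr_db. Qed.

Lemma rtDZ a x y : rt (a *: x + y) = a *: rt x + rt y.
Proof. by rewrite -!mulRT mulmxDl scalemxAl. Qed.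

Lemma dbDZl a x y z : db (a *: x + y) z = a *: db x z + db y z.
Proof.
rewrite /db starDl starZl mulmxDl -scalemxAl starDr starZr.
by rewrite scalerDr addrACA.
Qed.
Lemma dbDZr a x y z : db z (a *: x + y) = a *: db z x + db z y.
Proof.
rewrite /db rtDZ starDr starZr starDl starZl.
by rewrite scalerDr addrACA.
Qed.

Lemma db_anti x y : db x y = - db y x.
Proof.
apply/eqP; rewrite -addr_eq0 /db [star y (rt x) + _]addrC addrACA -!starDr.
by rewrite !rtE subrK subrKC starSS addNr.
Qed.

Hypothesis hCYB : forall a b d, CYB c R a b d = 0.

Lemma cyb_aux (a b c0 : K) : a + c0 + b = 0 -> -a - b = c0.
Proof.
move=> h; have -> : c0 = c0 - (a + c0 + b) by rewrite h subr0.
ring.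
Qed.

Lemma rho_basis i j : db (delta_mx 0 i) (delta_mx 0 j) *m R
   = br (delta_mx 0 i *m R) (delta_mx 0 j *m R).
Proof.
apply/rowP => d; rewrite -!pr_delta pr_mul /db prDl !pr_star /rt.
rewrite (pr_sym (delta_mx 0 i)) (pr_sym (delta_mx 0 j)) !pr_delta.
rewrite (brN (delta_mx 0 d *m R^T)) (brN (delta_mx 0 d *m R^T)) !mxeN.
apply: cyb_aux; rewrite -[RHS](hCYB i j d) /CYB /lbr -!rowE !mxE.
by congr (_ + _ + _); apply: eq_bigr => p _; apply: eq_bigr => s _; rewrite !mxE.
Qed.

Lemma rho_hom al be : db al be *m R = br (al *m R) (be *m R).
Proof.
apply: (@bilin_ext _ _ (fun x y => db x y *m R) (fun x y => br (x *m R) (y *m R))).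
- by move=> a x y z; rewrite dbDZl mulmxDl scalemxAl.
- by move=> a x y z; rewrite dbDZr mulmxDl scalemxAl.
- by move=> a x y z; rewrite mulmxDl -scalemxAl brDZl.
- by move=> a x y z; rewrite mulmxDl -scalemxAl brDZr.
- exact: rho_basis.
Qed.

Lemma rt_hom al be : rt (db al be) = br (rt be) (rt al).
Proof.
rewrite [LHS]rtE rho_hom {1}/db mulmxDl !starS -addrA -brBr -rtE.
by rewrite (brN (al *m R)) -brBr -rtE.
Qed.

Lemma db_db al be ga : db al (db be ga) = star (star al (rt be)) (rt ga)
  - star (star al (rt ga)) (rt be) + star (star be (rt ga)) (al *m R)
  + star (star ga (be *m R)) (al *m R).
Proof. by rewrite {1}/db rt_hom star_br /db starDl !addrA. Qed.

Lemma R1v x y w : star (star x (y *m S)) w + star (star y (x *m S)) w = 0.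
Proof. by rewrite starSS starNl addNr. Qed.
Lemma R2v x v z : star (star x v) (z *m S) + star (star z (x *m S)) v
   - star (star z v) (x *m S) = 0.
Proof. by rewrite starSS starS star_br opprB subrK subrr. Qed.

Lemma db_jacobi x y z : db x (db y z) + db y (db z x) + db z (db x y) = 0.
Proof.
have := (@lc6 _ (db x (db y z) + db y (db z x) + db z (db x y)) _ _ _ _ _ _ (R2v x (y *m R) z) (R2v x (y *m S) z) (R1v x z (y *m R))
  (R2v x (z *m R) y) (R2v x (z *m S) y) (R2v y (x *m R) z)).
apply.
rewrite !db_db !rtE !starBr !starBl.
apply/rowP => k; rewrite !(mxeD, mxeN).
ring.
Qed.

Lemma cob_lin a x y : cob c R (a *: x + y) = a *: cob c R x + cob c R y.
Proof.
rewrite /cob /tmap !trmx1 !mulmx1 !mul1mx admDZ linearD linearZ /=.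
rewrite mulmxDl mulmxDr -!scalemxAl -!scalemxAr.
by apply/matrixP => i j; rewrite !(mxeD, mxeZ); ring.
Qed.

Lemma cob_anti x : (cob c R x)^T = - cob c R x.
Proof.
rewrite /cob /tmap !trmx1 !mulmx1 !mul1mx.
have h := hinvS x; rewrite mulmxDr mulmxDl in h.
apply/eqP; rewrite -addr_eq0; apply/eqP; rewrite -h.
rewrite linearD /= !trmx_mul !trmxK.
by apply/matrixP => i j; rewrite !(mxeD, mxeN); ring.
Qed.

Lemma cob_cocycle x y : cob c R (br x y) =
  tmap (A x) 1 (cob c R y) + tmap 1 (A x) (cob c R y)
  - (tmap (A y) 1 (cob c R x) + tmap 1 (A y) (cob c R x)).
Proof.
rewrite /cob /tmap !trmx1 !mulmx1 !mul1mx adm_br linearB /= !trmx_mul.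
rewrite !(mulmxDl, mulmxDr, mulmxBl, mulmxBr, mulNmx, mulmxN) !mulmxA.
by apply/matrixP => i j; rewrite !(mxeD, mxeN); ring.
Qed.

Variable E : 'M[K]_n.
Hypothesis hENL : is_ENL br E.
Hypothesis hRE : R *m E = E^T *m R.

Lemma AE x : A x *m E = E *m A x.
Proof. by apply: mx_ext => y; rewrite !mulmxA !admE; apply: hENL. Qed.

Lemma AxE x : A (x *m E) = A x *m E.
Proof.
apply: mx_ext => y; rewrite mulmxA !admE brN -hENL -mulNmx -brN //.
Qed.

Lemma cobE x : cob c R (x *m E) = tmap E 1 (cob c R x).
Proof.
rewrite /cob /tmap !trmx1 !mulmx1 !mul1mx AxE trmx_mul mulmxDr !mulmxA.
by congr (_ + _); rewrite -mulmxA AE mulmxA hRE.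
Qed.

Lemma cobE2 x : cob c R x *m E = cob c R (x *m E).
Proof.
rewrite /cob /tmap !trmx1 !mulmx1 !mul1mx AxE trmx_mul mulmxDl.
congr (_ + _).
  by rewrite -mulmxA hRE mulmxA -[(A x)^T *m E^T]trmx_mul -AE trmx_mul.
by rewrite mulmxA.
Qed.

Lemma db_ENL al be : db al be *m E^T = db al (be *m E^T).
Proof.
apply: row_ext => x.
by rewrite pr_mul trmxK !pr_db -pr_mul -mulmxA cobE2.
Qed.
End Lie.

Theorem theorem5p6 (K : closedFieldType) (hK : [pchar K] =i pred0) (n : nat)
  (c : 'I_n -> 'I_n -> 'I_n -> K) (E : 'M[K]_n) (R : 'M[K]_n)
  (hlie : is_lie_bracket (lbr c))
  (hENL : is_ENL (lbr c) E)
  (hCYB : forall a b d, CYB c R a b d = 0)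
  (hE : tmap 1 E R - tmap E 1 R = 0)
  (hinv : forall x, tmap (adm c x) 1 (R + R^T) + tmap 1 (adm c x) (R + R^T) = 0) :
  is_ENL_bialgebra c (cob c R) E /\
  (forall x, cob c R (x *m E) = tmap E 1 (cob c R x)).
Proof.
have hinvS : forall x, (adm c x)^T *m (R + R^T) + (R + R^T) *m adm c x = 0.
  by move=> x; have := hinv x; rewrite /tmap trmx1 mulmx1 mul1mx.
have hRE : R *m E = E^T *m R.
  by apply/eqP; rewrite -subr_eq0; apply/eqP; move: hE; rewrite /tmap trmx1 mulmx1 mul1mx.
split; last by move=> x; apply: cobE.
split => //.
- split => //.
  + by move=> a x y; apply: cob_lin.
  + by move=> x; apply: cob_anti.
  + split.
    * by move=> a x y z; rewrite !dbE //; apply: dbDZl.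
    * by move=> x y; rewrite !dbE //; apply: db_anti.
    * by move=> x y z; rewrite !dbE //; apply: db_jacobi.
  + by move=> x y; apply: cob_cocycle.
- by move=> x y; rewrite !dbE //; apply: db_ENL.
Qed.
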